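(* Let $\gamma>0$, $s>0$, $u\ge\gamma$ and $v\in\mathbb{R}$. Let $G(u,v;s)=(u^2+v^2)^{-s}$ and $D_1=\partial/\partial u$. Then for $j\ge1$, $$\frac{D_1^jG(u,v;s)}{G(u,v;s)}=\frac{P_j(u,v;s)}{(u^2+v^2)^j},$$ where $P_j$ are the polynomials defined by $P_1(u,v;s)=-2su$ and $P_{m+1}(u,v;s)=(u^2+v^2)\frac{\partial P_m}{\partial u}(u,v;s)-2(s+m)uP_m(u,v;s)$; and $$-\frac{2s}{\gamma}\le\frac{D_1G}{G}<0,\qquad -\frac{s}{4\gamma^2(s+1)}\le\frac{D_1^2G}{G}\le\frac{2s(2s+1)}{\gamma^2},$$ $$-\frac{2s(2s+1)(2s+2)}{\gamma^3}\le\frac{D_1^3G}{G}\le\frac{2s(2s+2)}{\gamma^3(s+2)^2},$$ $$-\frac{2s(s+1)(2s+2)\cdot3}{\gamma^4}\le\frac{D_1^4G}{G}\le\frac{2s(2s+1)(2s+2)(2s+3)}{\gamma^4},$$ where all quotients are evaluated at $(u,v;s)$. *)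

(* Defs.v *)
From Stdlib Require Import Reals.
From Coquelicot Require Import Coquelicot.
Open Scope R_scope.

Definition G (u v s : R) : R := Rpower (u ^ 2 + v ^ 2) (- s).

(* P m v s u = P_m(u,v;s): P_1 = -2 s u,
   P_{m+1} = (u^2+v^2) dP_m/du - 2 (s+m) u P_m.  (P_0 is unused, set to 0.) *)
Fixpoint P (m : nat) (v s : R) : R -> R :=
  match m with
  | O => fun _ => 0
  | S m' =>
      match m' with
      | O => fun u => - 2 * s * u
      | S _ => fun u =>
          (u ^ 2 + v ^ 2) * Derive (P m' v s) u
          - 2 * (s + INR m') * u * P m' v s u
      end
  end.

Definition DjG_over_G (j : nat) (u v s : R) : R :=
  Derive_n (fun x => G x v s) j u / G u v s.

(* Main.v *)
Require Import Defs.
From Stdlib Require Import Reals Lra Psatz.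
From Coquelicot Require Import Coquelicot.
Open Scope R_scope.

Fixpoint peval (l : list R) (x : R) : R :=
  match l with nil => 0 | cons c t => c + x * peval t x end.
Fixpoint padd (l m : list R) : list R :=
  match l, m with
  | nil, _ => m
  | _, nil => l
  | cons a l', cons b m' => cons (a+b) (padd l' m') end.
Lemma padd_ok l : forall m x, peval (padd l m) x = peval l x + peval m x.
Proof. induction l as [|a l IH]; intros [|b m] x; simpl; try ring. rewrite IH; ring. Qed.
Lemma pscal_ok c l x : peval (List.map (Rmult c) l) x = c * peval l x.
Proof. induction l as [|a l IH]; simpl; try ring. rewrite IH; ring. Qed.

Definition IsPoly (f : R -> R) := exists l, forall x, f x = peval l x.

Lemma peval_deriv l : exists l', forall x, is_derive (peval l) x (peval l' x).
Proof.
  induction l as [|a l [l' IH]].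
  - exists nil; intros x; simpl. change (is_derive (fun _ => 0) x 0). auto_derive; auto.
  - exists (padd l (cons 0 l')). intros x. rewrite padd_ok. simpl.
    specialize (IH x). change (is_derive (fun x => a + x * peval l x) x (peval l x + (0 + x * peval l' x))).
    auto_derive. eexists; exact IH. replace (Derive (fun x0 : R => peval l x0) x) with (peval l' x). ring. symmetry; apply is_derive_unique; exact IH.
Qed.

Lemma IsPoly_deriv f : IsPoly f -> (forall x, ex_derive f x) /\ IsPoly (Derive f).
Proof.
  intros [l Hl]. destruct (peval_deriv l) as [l' Hd].
  assert (E : forall x, is_derive f x (peval l' x)).
  { intros x. eapply is_derive_ext. intros t; symmetry; apply Hl. apply Hd. }
  split. intros x; eexists; apply E.
  exists l'. intros x. apply is_derive_unique, E.
Qed.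

Lemma IsPoly_P m v s : IsPoly (P m v s).
Proof.
  induction m as [|m IH].
  - exists nil; intros; reflexivity.
  - destruct m as [|m].
    + exists (cons 0 (cons (-2*s) nil)). intros x; simpl. ring.
    + destruct (IsPoly_deriv _ IH) as [_ [l' Hl']]. destruct IH as [l Hl].
      set (c := 2 * (s + INR (S m))).
      exists (padd (padd (List.map (Rmult (v^2)) l') (cons 0 (cons 0 l')))
                   (cons 0 (List.map (Rmult (-c)) l))).
      intros x. rewrite !padd_ok, !pscal_ok. simpl peval.
      change (P (S (S m)) v s x) with
        ((x ^ 2 + v ^ 2) * Derive (P (S m) v s) x - c * x * P (S m) v s x).
      rewrite Hl, Hl', pscal_ok. ring.
Qed.

Lemma P_ex_derive m v s x : ex_derive (P m v s) x.
Proof. apply (IsPoly_deriv _ (IsPoly_P m v s)). Qed.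

Lemma step (f : R -> R) v s k x : ex_derive f x -> 0 < x^2+v^2 ->
  is_derive (fun x => f x * exp (- s * ln (x^2+v^2)) / (x^2+v^2)^(S k)) x
   (((x ^ 2 + v ^ 2) * Derive f x - 2 * (s + INR (S k)) * x * f x) * exp (- s * ln (x^2+v^2)) / (x^2+v^2)^(S (S k))).
Proof.
  intros Hf H.
  assert (Hk : (x^2+v^2)^k <> 0) by (apply pow_nonzero; lra).
  auto_derive; replace (x*(x*1)+v*(v*1)) with (x^2+v^2) by ring.
  - repeat split; auto; try lra. apply Rmult_integral_contrapositive; split; lra.
  - change (match k with 0%nat => 1 | S _ => INR k + 1 end) with (INR (S k)).
    set (E := exp _). set (D := Derive f x). set (r := x^2+v^2) in *. simpl pow.
    field. split; lra.
Qed.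
Lemma formula v s : forall j, (1 <= j)%nat -> forall x, 0 < x ->
  Derive_n (fun x => G x v s) j x = P j v s x * G x v s / (x^2+v^2)^j.
Proof.
  intros j Hj. induction Hj as [|j Hj IH]; intros x Hx.
  - simpl. apply is_derive_unique. unfold G, Rpower.
    assert (0 < x^2+v^2) by nra.
    auto_derive. lra. simpl.
    replace (x*(x*1)+v*(v*1)) with (x^2+v^2) by ring. set (E := exp _). field. lra.
  - simpl Derive_n.
    rewrite (Derive_ext_loc _ (fun x => P j v s x * G x v s / (x^2+v^2)^j)).
    2:{ exists (mkposreal x Hx). intros y Hy. apply IH.
        unfold ball in Hy; simpl in Hy; unfold AbsRing_ball, abs, minus, plus, opp in Hy; simpl in Hy.
        apply Rabs_def2 in Hy. lra. }
    destruct j as [|k]; [lia|].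
    apply is_derive_unique. unfold G, Rpower.
    assert (0 < x^2+v^2) by nra.
    apply step. apply P_ex_derive. exact H.
Qed.

Lemma lb G q c p : 0 < G -> 0 < q -> - c * q <= p * G -> - (c / G) <= p / q.
Proof. intros HG Hq H. apply Rmult_le_reg_r with (G*q). nra.
  replace (- (c / G) * (G * q)) with (- c * q) by (field; lra).
  replace (p / q * (G * q)) with (p * G) by (field; lra). exact H. Qed.
Lemma ub G q c p : 0 < G -> 0 < q -> p * G <= c * q -> p / q <= c / G.
Proof. intros HG Hq H. apply Rmult_le_reg_r with (G*q). nra.
  replace (c / G * (G * q)) with (c * q) by (field; lra).
  replace (p / q * (G * q)) with (p * G) by (field; lra). exact H. Qed.

Section B.
Variables g u r s : R.
Hypotheses (hg : 0 < g) (hgu : g <= u) (hur : u^2 <= r) (hs : 0 < s).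

Lemma pos_facts : 0 < u /\ 0 < r /\ g^2 <= u^2 /\ g^3 <= u^3 /\ g^4 <= u^4 /\ g <= r / u.
Proof.
  assert (0 < u) by lra. assert (0 < r) by nra.
  repeat split; try lra.
  - apply pow_incr; lra.
  - apply pow_incr; lra.
  - apply pow_incr; lra.
  - apply Rmult_le_reg_r with u; auto. field_simplify; nra.
Qed.

Lemma B1l : - (2*s) * r <= (-2*s*u) * g.
Proof. destruct pos_facts as (?&?&?&?&?&?). assert (u*g <= u^2) by nra.
  assert (s*(u*g) <= s*r) by (apply Rmult_le_compat_l; lra). nra. Qed.

Lemma B2l : - s * (r^2) <= (-2*s*r + 4*s*(s+1)*u^2) * (4*g^2*(s+1)).
Proof. destruct pos_facts as (?&?&?&?&?&?).
  destruct (Rle_lt_dec 0 (-2*s*r + 4*s*(s+1)*u^2)).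
  - assert (0 <= (-2*s*r + 4*s*(s+1)*u^2) * (4*g^2*(s+1))) by (apply Rmult_le_pos; nra).
    assert (0 <= s*r^2) by nra. lra.
  - assert (0 <= (-(-2*s*r + 4*s*(s+1)*u^2) * (4*(s+1))) * (u^2 - g^2)) by (apply Rmult_le_pos; nra).
    assert ((-2*s*r + 4*s*(s+1)*u^2) * (4*g^2*(s+1)) >= (-2*s*r + 4*s*(s+1)*u^2) * (4*u^2*(s+1))) by nra.
    assert (0 <= s * (r - 4*(s+1)*u^2)^2) by (apply Rmult_le_pos; [lra| apply pow2_ge_0]).
    assert ((-2*s*r + 4*s*(s+1)*u^2) * (4*u^2*(s+1)) + s*r^2 = s * (r - 4*(s+1)*u^2)^2) by ring.
    lra.
Qed.

Lemma B2u : (-2*s*r + 4*s*(s+1)*u^2) * g^2 <= 2*s*(2*s+1) * r^2.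
Proof. destruct pos_facts as (?&?&?&?&?&?).
  assert (g^2 <= r) by lra.
  assert (-2*s*r + 4*s*(s+1)*u^2 <= 2*s*(2*s+1)*r) by nra.
  destruct (Rle_lt_dec 0 (-2*s*r + 4*s*(s+1)*u^2)); nra.
Qed.

Lemma B3l : - (2*s*(2*s+1)*(2*s+2)) * r^3 <= (4*s*(s+1)*u*(3*r - 2*(s+2)*u^2)) * g^3.
Proof. destruct pos_facts as (?&?&?&?&?&?).
  assert (0 < s*(s+1)) by nra.
  assert (0 < r^3) by (apply pow_lt; lra).
  assert (0 < g^3) by (apply pow_lt; lra).
  set (X := 3*r - 2*(s+2)*u^2).
  replace ((4*s*(s+1)*u*X) * g^3) with (4*(s*(s+1)) * (u*X*g^3)) by ring.
  replace (- (2*s*(2*s+1)*(2*s+2)) * r^3) with (4*(s*(s+1)) * (-(2*s+1)*r^3)) by ring.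
  apply Rmult_le_compat_l; [lra|].
  destruct (Rle_lt_dec 0 X).
  - assert (0 <= u*X*g^3) by (apply Rmult_le_pos; [apply Rmult_le_pos|]; lra).
    assert (0 <= (2*s+1)*r^3) by (apply Rmult_le_pos; lra). lra.
  - assert (0 <= (-(u*X)) * (u^3 - g^3)) by (apply Rmult_le_pos; nra).
    assert (u^6 <= r^3) by (replace (u^6) with ((u^2)^3) by ring; apply pow_incr; nra).
    assert (u^4*r >= u^6) by (replace (u^6) with (u^4*u^2) by ring; apply Rle_ge, Rmult_le_compat_l; [apply pow_le; lra| lra]).
    assert (u*X*u^3 = 3*u^4*r - 2*(s+2)*u^6) by (unfold X; ring).
    assert ((2*s+1)*r^3 >= (2*s+1)*u^6) by (apply Rle_ge, Rmult_le_compat_l; lra).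
    nra.
Qed.

Lemma B3u : (4*s*(s+1)*u*(3*r - 2*(s+2)*u^2)) * g^3 * (s+2)^2 <= 2*s*(2*s+2) * r^3.
Proof. destruct pos_facts as (?&?&?&?&?&?).
  assert (0 < s*(s+1)) by nra.
  assert (0 < r^3) by (apply pow_lt; lra).
  assert (0 < g^3) by (apply pow_lt; lra).
  set (X := 3*r - 2*(s+2)*u^2).
  replace ((4*s*(s+1)*u*X) * g^3 * (s+2)^2) with (4*(s*(s+1)) * (u*X*g^3*(s+2)^2)) by ring.
  replace (2*s*(2*s+2) * r^3) with (4*(s*(s+1)) * r^3) by ring.
  apply Rmult_le_compat_l; [lra|].
  destruct (Rle_lt_dec 0 X).
  - assert (0 <= (u*X)*(u^3 - g^3)) by (apply Rmult_le_pos; [apply Rmult_le_pos|]; lra).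
    assert (0 <= (r - (s+2)*u^2)^2 * (r + 2*(s+2)*u^2)) by (apply Rmult_le_pos; [apply pow2_ge_0| nra]).
    assert ((r - (s+2)*u^2)^2 * (r + 2*(s+2)*u^2) = r^3 - u*X*u^3*(s+2)^2) by (unfold X; ring).
    assert (0 <= (u*X)*(u^3 - g^3)*(s+2)^2) by (apply Rmult_le_pos; [lra| apply pow2_ge_0]).
    nra.
  - assert (u*X*g^3 <= 0).
    { assert (u*X <= 0) by nra. nra. }
    assert (0 <= (s+2)^2) by apply pow2_ge_0. nra.
Qed.

Lemma B4l : - (2*s*(s+1)*(2*s+2)*3) * r^4 <=
   (4*s*(s+1)*(3*r^2 - 12*(s+2)*u^2*r + 4*(s+2)*(s+3)*u^4)) * g^4.
Proof. destruct pos_facts as (?&?&?&?&?&?).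
  assert (0 < s*(s+1)) by nra.
  assert (0 < r^4) by (apply pow_lt; lra).
  assert (0 < g^4) by (apply pow_lt; lra).
  set (h := 3*r^2 - 12*(s+2)*u^2*r + 4*(s+2)*(s+3)*u^4).
  replace ((4*s*(s+1)*h) * g^4) with (4*(s*(s+1)) * (h*g^4)) by ring.
  replace (- (2*s*(s+1)*(2*s+2)*3) * r^4) with (4*(s*(s+1)) * (-(3*(s+1))*r^4)) by ring.
  apply Rmult_le_compat_l; [lra|].
  destruct (Rle_lt_dec 0 h).
  - assert (0 <= h*g^4) by (apply Rmult_le_pos; lra). nra.
  - assert (0 <= (-h)*(u^4 - g^4)) by (apply Rmult_le_pos; lra).
    set (a := s+2).
    (* h u^4 + 3(a-1) r^4 >= 0 *)
    assert (K1 : 0 <= a/(a+1) * (u^2)^2 * (2*(a+1)*u^2 - 3*r)^2).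
    { apply Rmult_le_pos; [apply Rmult_le_pos|apply pow2_ge_0].
      apply Rlt_le, Rdiv_lt_0_compat; unfold a; lra. apply pow2_ge_0. }
    assert (K2 : (u^2)^2 <= r^2) by (apply pow_incr; nra).
    assert (K3 : 0 <= 3*a*(a-2)/(a+1)) by (apply Rmult_le_pos; [unfold a; nra| apply Rlt_le, Rinv_0_lt_compat; unfold a; lra]).
    assert (K4 : h*u^4 + 3*(a-1)*r^4 = a/(a+1) * (u^2)^2 * (2*(a+1)*u^2 - 3*r)^2
               + (3*(a-1) - (6*a-3)/(a+1)*(u^4/r^2)) * r^4).
    { unfold h, a. field. split; lra. }
    assert (K5 : (6*a-3)/(a+1)*(u^4/r^2) <= (6*a-3)/(a+1)).
    { rewrite <- (Rmult_1_r ((6*a-3)/(a+1))) at 2. apply Rmult_le_compat_l.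
      apply Rmult_le_pos; [unfold a; lra| apply Rlt_le, Rinv_0_lt_compat; unfold a; lra].
      apply Rmult_le_reg_r with (r^2). apply pow_lt; lra. field_simplify; [|lra]. simpl in K2 |- *. lra. }
    assert (K6 : 3*(a-1) - (6*a-3)/(a+1) = 3*a*(a-2)/(a+1)) by (field; unfold a; lra).
    assert (0 <= (3*(a-1) - (6*a-3)/(a+1)*(u^4/r^2)) * r^4) by (apply Rmult_le_pos; lra).
    unfold a in *. nra.
Qed.

Lemma B4u : (4*s*(s+1)*(3*r^2 - 12*(s+2)*u^2*r + 4*(s+2)*(s+3)*u^4)) * g^4
   <= 2*s*(2*s+1)*(2*s+2)*(2*s+3) * r^4.
Proof. destruct pos_facts as (?&?&?&?&?&?).
  assert (0 < s*(s+1)) by nra.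
  assert (0 < r^4) by (apply pow_lt; lra).
  assert (0 < g^4) by (apply pow_lt; lra).
  set (h := 3*r^2 - 12*(s+2)*u^2*r + 4*(s+2)*(s+3)*u^4).
  replace ((4*s*(s+1)*h) * g^4) with (4*(s*(s+1)) * (h*g^4)) by ring.
  replace (2*s*(2*s+1)*(2*s+2)*(2*s+3) * r^4) with (4*(s*(s+1)) * ((2*s+1)*(2*s+3)*r^4)) by ring.
  apply Rmult_le_compat_l; [lra|].
  assert (0 <= (2*s+1)*(2*s+3)*r^4) by (apply Rmult_le_pos; nra).
  destruct (Rle_lt_dec 0 h).
  - assert (g^4 <= r^2) by (replace (r^2) with (r^2) by ring; assert ((u^2)^2 <= r^2) by (apply pow_incr; nra); simpl in *; nra).
    assert (h*g^4 <= h*r^2) by (apply Rmult_le_compat_l; lra).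
    assert (0 <= (s+2)*(s+3)*u^2*(r - u^2)) by (apply Rmult_le_pos; nra).
    assert (0 <= (r-u^2)*(4*s*(s+1)*r)) by (apply Rmult_le_pos; nra).
    assert (h <= (2*s+1)*(2*s+3)*r^2) by (unfold h; nra).
    assert (h*r^2 <= (2*s+1)*(2*s+3)*r^2*r^2) by (apply Rmult_le_compat_r; [apply pow2_ge_0| lra]).
    replace (r^4) with (r^2*r^2) by ring. lra.
  - assert (h*g^4 <= 0) by nra. lra.
Qed.
End B.

Lemma DP1 v s x : Derive (P 1 v s) x = -2*s.
Proof. apply is_derive_unique. simpl. auto_derive; auto. ring. Qed.

Lemma P2_eq v s x : P 2 v s x = -2*s*(x^2+v^2) + 4*s*(s+1)*x^2.
Proof. change (P 2 v s x) with ((x^2+v^2) * Derive (P 1 v s) x - 2*(s+INR 1)*x*P 1 v s x).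
  rewrite DP1. simpl. ring. Qed.

Lemma DP2 v s x : Derive (P 2 v s) x = 4*s*(2*s+1)*x.
Proof. rewrite (Derive_ext _ (fun x => -2*s*(x^2+v^2) + 4*s*(s+1)*x^2)) by apply P2_eq.
  apply is_derive_unique. auto_derive; auto. ring. Qed.

Lemma P3_eq v s x : P 3 v s x = 4*s*(s+1)*x*(3*(x^2+v^2) - 2*(s+2)*x^2).
Proof. change (P 3 v s x) with ((x^2+v^2) * Derive (P 2 v s) x - 2*(s+INR 2)*x*P 2 v s x).
  rewrite DP2, P2_eq. simpl. ring. Qed.

Lemma DP3 v s x : Derive (P 3 v s) x = 12*s*(s+1)*(x^2+v^2) - 24*s*(s+1)^2*x^2.
Proof. rewrite (Derive_ext _ (fun x => 4*s*(s+1)*x*(3*(x^2+v^2) - 2*(s+2)*x^2))) by apply P3_eq.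
  apply is_derive_unique. auto_derive; auto. ring. Qed.

Lemma P4_eq v s x : P 4 v s x =
  4*s*(s+1)*(3*(x^2+v^2)^2 - 12*(s+2)*x^2*(x^2+v^2) + 4*(s+2)*(s+3)*x^4).
Proof. change (P 4 v s x) with ((x^2+v^2) * Derive (P 3 v s) x - 2*(s+INR 3)*x*P 3 v s x).
  rewrite DP3, P3_eq. simpl. ring. Qed.

Theorem lemma5p6 (gamma s u v : R) (hgamma : 0 < gamma) (hs : 0 < s)
  (hu : gamma <= u) :
  (forall j : nat, (1 <= j)%nat ->
     DjG_over_G j u v s = P j v s u / (u ^ 2 + v ^ 2) ^ j) /\
  (- (2 * s / gamma) <= DjG_over_G 1 u v s /\ DjG_over_G 1 u v s < 0) /\
  (- (s / (4 * gamma ^ 2 * (s + 1))) <= DjG_over_G 2 u v s /\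
     DjG_over_G 2 u v s <= 2 * s * (2 * s + 1) / gamma ^ 2) /\
  (- (2 * s * (2 * s + 1) * (2 * s + 2) / gamma ^ 3) <= DjG_over_G 3 u v s /\
     DjG_over_G 3 u v s <= 2 * s * (2 * s + 2) / (gamma ^ 3 * (s + 2) ^ 2)) /\
  (- (2 * s * (s + 1) * (2 * s + 2) * 3 / gamma ^ 4) <= DjG_over_G 4 u v s /\
     DjG_over_G 4 u v s <= 2 * s * (2 * s + 1) * (2 * s + 2) * (2 * s + 3) / gamma ^ 4).
Proof.
  assert (Hu : 0 < u) by lra.
  assert (HF : forall j : nat, (1 <= j)%nat ->
     DjG_over_G j u v s = P j v s u / (u ^ 2 + v ^ 2) ^ j).
  { intros j Hj. unfold DjG_over_G. rewrite formula by assumption.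
    assert (0 < G u v s) by (unfold G, Rpower; apply exp_pos).
    assert (0 < (u^2+v^2)^j) by (apply pow_lt; nra).
    field. lra. }
  assert (hur : u^2 <= u^2+v^2) by nra.
  set (r := u^2+v^2) in *.
  assert (hr : 0 < r) by nra.
  assert (hg2 : 0 < gamma^2) by (apply pow_lt; lra).
  assert (hg3 : 0 < gamma^3) by (apply pow_lt; lra).
  assert (hg4 : 0 < gamma^4) by (apply pow_lt; lra).
  assert (hr2 : 0 < r^2) by (apply pow_lt; lra).
  assert (hr3 : 0 < r^3) by (apply pow_lt; lra).
  assert (hr4 : 0 < r^4) by (apply pow_lt; lra).
  split; [exact HF|].
  rewrite !HF by lia.
  rewrite P4_eq, P3_eq, P2_eq. simpl (P 1 v s u). fold r.
  repeat split.
  - apply lb; try lra. rewrite pow_1. pose proof (B1l gamma u r s hgamma hu hur hs). lra.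
  - rewrite pow_1. assert (0 < /r) by (apply Rinv_0_lt_compat; lra). unfold Rdiv. assert (0 < s*u*/r) by (apply Rmult_lt_0_compat; [apply Rmult_lt_0_compat|]; lra). lra.
  - apply lb; try nra. pose proof (B2l gamma u r s hgamma hu hur hs). lra.
  - apply ub; try nra. pose proof (B2u gamma u r s hgamma hu hur hs). lra.
  - apply lb; try nra. pose proof (B3l gamma u r s hgamma hu hur hs). lra.
  - apply ub; try nra. pose proof (B3u gamma u r s hgamma hu hur hs). lra.
  - apply lb; try nra. pose proof (B4l gamma u r s hgamma hu hur hs). lra.
  - apply ub; try nra. pose proof (B4u gamma u r s hgamma hu hur hs). lra.
Qed.
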